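(* Let $P$ be a poset such that the interval monoid $\mathcal{M}(P)$ is a gcd-monoid, and let $[u,v]$ be an extreme spindle of $P$. Then the category $\mathcal{C}(P,u,v)$ is a gcd-category, and its universal monoid $\mathcal{M}(P,u,v)=\mathrm{U_{mon}}(\mathcal{C}(P,u,v))$ is a gcd-monoid.
   Context: For a poset $P$, $\mathcal{M}(P)$ is the monoid presented by generators $[x,y]$ ($x\le y$) and relations $[x,x]=1$, $[x,z]=[x,y][y,z]$ for $x\le y\le z$. A closed interval $[u,v]$ with $u<v$, containing some $z$ with $u<z<v$, is a spindle if the comparability relation on the open interval $\{x:u<x<v\}$ is an equivalence relation; it is an extreme spindle if moreover $u$ is minimal and $v$ is maximal in $P$. Let $\mathcal{C}_{u,v}$ be the set of maximal chains of $[u,v]$. The category $\mathcal{C}(P,u,v)$ (arrow-only, identities $[x,x]$ for $x\in P$) has underlying set $\{[x,y]: x\le y \text{ in } P,\ (x,y)\ne(u,v)\}\cup\mathcal{C}_{u,v}$, where each $Z\in\mathcal{C}_{u,v}$ has source $[u,u]$ and target $[v,v]$, and the only defined products are: $[u,u]\cdot Z=Z\cdot[v,v]=Z$ for $Z\in\mathcal{C}_{u,v}$; $[x,y]\cdot[y,z]=[x,z]$ whenever $x\le y\le z$ and $(x,z)\ne(u,v)$; $[u,z]\cdot[z,v]=Z$ whenever $u<z<v$ and $Z$ is the maximal chain of $[u,v]$ containing $z$. For a category $S$ (arrow-only), $\mathrm{U_{mon}}(S)$ is the monoid presented by generators $\varepsilon(x)$, $x\in S$, relations $\varepsilon(e)=1$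 for identities and $\varepsilon(x)\varepsilon(y)=\varepsilon(xy)$ whenever $xy$ is defined. Left/right divisibility in $C$: $a\leqslant b$ iff $b=ax$, $a\mathbin{\widetilde\leqslant}b$ iff $b=xa$. A category is conical if $xy$ being an identity forces $x$ to be an identity. A gcd-category is a conical, left and right cancellative category in which any two elements with the same source have a greatest lower bound for $\leqslant$ and any two with the same target have a greatest lower bound for $\mathbin{\widetilde\leqslant}$; a gcd-monoid is a gcd-category with one identity. *)

(* Defs.v *)
From Stdlib Require Import List.
Import ListNotations.
Set Implicit Arguments.
Unset Strict Implicit.

Definition is_poset (T : Type) (le : T -> T -> Prop) : Prop :=
  (forall x, le x x) /\
  (forall x y, le x y -> le y x -> x = y) /\
  (forall x y z, le x y -> le y z -> le x z).

Definition lt (T : Type) (le : T -> T -> Prop) (x y : T) : Prop := le x y /\ x <> y.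

Definition comparable (T : Type) (le : T -> T -> Prop) (x y : T) : Prop := le x y \/ le y x.

Definition open_int (T : Type) (le : T -> T -> Prop) (u v x : T) : Prop :=
  lt le u x /\ lt le x v.

Definition closed_int (T : Type) (le : T -> T -> Prop) (u v x : T) : Prop :=
  le u x /\ le x v.

Definition equiv_on (T : Type) (D : T -> Prop) (R : T -> T -> Prop) : Prop :=
  (forall x, D x -> R x x) /\
  (forall x y, D x -> D y -> R x y -> R y x) /\
  (forall x y z, D x -> D y -> D z -> R x y -> R y z -> R x z).

Definition spindle (T : Type) (le : T -> T -> Prop) (u v : T) : Prop :=
  lt le u v /\ (exists z, open_int le u v z) /\
  equiv_on (open_int le u v) (comparable le).

Definition minimal (T : Type) (le : T -> T -> Prop) (u : T) : Prop :=
  forall x, le x u -> x = u.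
Definition maximal (T : Type) (le : T -> T -> Prop) (v : T) : Prop :=
  forall x, le v x -> x = v.

Definition extreme_spindle (T : Type) (le : T -> T -> Prop) (u v : T) : Prop :=
  spindle le u v /\ minimal le u /\ maximal le v.

Definition chain_in (T : Type) (le : T -> T -> Prop) (u v : T) (Z : T -> Prop) : Prop :=
  (forall x, Z x -> closed_int le u v x) /\
  (forall x y, Z x -> Z y -> comparable le x y).

Definition maxchain (T : Type) (le : T -> T -> Prop) (u v : T) (Z : T -> Prop) : Prop :=
  chain_in le u v Z /\
  (forall Z', chain_in le u v Z' -> (forall x, Z x -> Z' x) -> forall x, Z' x -> Z x).

(** * Arrow-only categories (possibly presented up to an equality [aeq] on arrows)
    [mul a b c] means "the product ab is defined and equals c". *)
Record ACat := {
  Arr : Type;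
  Ob : Type;
  src : Arr -> Ob;
  tgt : Arr -> Ob;
  aeq : Arr -> Arr -> Prop;
  isid : Arr -> Prop;
  mul : Arr -> Arr -> Arr -> Prop
}.

Arguments src : clear implicits.
Arguments tgt : clear implicits.
Arguments aeq : clear implicits.
Arguments isid : clear implicits.
Arguments mul : clear implicits.

Section GcdCat.
Variable C : ACat.

Definition ldiv (a b : Arr C) : Prop := exists x c, mul C a x c /\ aeq C c b.
Definition rdiv (a b : Arr C) : Prop := exists x c, mul C x a c /\ aeq C c b.

Definition conical : Prop :=
  forall x y e, mul C x y e -> isid C e -> isid C x.

Definition left_cancellative : Prop :=
  forall a a' x y c d, mul C a x c -> mul C a' y d -> aeq C a a' -> aeq C c d -> aeq C x y.

Definition right_cancellative : Prop :=
  forall a a' x y c d, mul C x a c -> mul C y a' d -> aeq C a a' -> aeq C c d -> aeq C x y.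

Definition left_gcds : Prop :=
  forall a b, src C a = src C b ->
    exists g, ldiv g a /\ ldiv g b /\ (forall h, ldiv h a -> ldiv h b -> ldiv h g).

Definition right_gcds : Prop :=
  forall a b, tgt C a = tgt C b ->
    exists g, rdiv g a /\ rdiv g b /\ (forall h, rdiv h a -> rdiv h b -> rdiv h g).

Definition is_gcd_category : Prop :=
  conical /\ left_cancellative /\ right_cancellative /\ left_gcds /\ right_gcds.
End GcdCat.

(** * Presented monoids: words over generators modulo the congruence generated by R *)
Inductive cong (G : Type) (R : list G -> list G -> Prop) : list G -> list G -> Prop :=
| cong_base : forall p a b q, R a b -> cong R (p ++ a ++ q) (p ++ b ++ q)
| cong_refl : forall a, cong R a a
| cong_sym : forall a b, cong R a b -> cong R b a
| cong_trans : forall a b c, cong R a b -> cong R b c -> cong R a c.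

Definition monoid_cat (G : Type) (R : list G -> list G -> Prop) : ACat :=
  {| Arr := list G; Ob := unit; src := fun _ => tt; tgt := fun _ => tt;
     aeq := cong R; isid := fun w => cong R w nil;
     mul := fun a b c => c = a ++ b |}.

Definition is_gcd_monoid (G : Type) (R : list G -> list G -> Prop) : Prop :=
  is_gcd_category (monoid_cat R).

Definition IGen (T : Type) (le : T -> T -> Prop) : Type := { p : T * T | le (fst p) (snd p) }.

Definition interval_rel (T : Type) (le : T -> T -> Prop) (a b : list (IGen le)) : Prop :=
  (exists (x : T) (h : le x x), a = [exist _ (x, x) h] /\ b = []) \/
  (exists (x y z : T) (hxy : le x y) (hyz : le y z) (hxz : le x z),
      a = [exist (fun p => le (fst p) (snd p)) (x, z) hxz] /\
      b = [exist (fun p => le (fst p) (snd p)) (x, y) hxy;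
           exist (fun p => le (fst p) (snd p)) (y, z) hyz]).

Section CPuv.
Variables (T : Type) (le : T -> T -> Prop) (u v : T).

Inductive CArr : Type :=
| CIv (x y : T) (h : le x y) (hn : (x, y) <> (u, v))
| CCh (Z : T -> Prop) (hZ : maxchain le u v Z).

Arguments CIv : clear implicits.
Arguments CCh : clear implicits.

Definition Csrc (a : CArr) : T := match a with CIv x _ _ _ => x | CCh _ _ => u end.
Definition Ctgt (a : CArr) : T := match a with CIv _ y _ _ => y | CCh _ _ => v end.

Definition Caeq (a b : CArr) : Prop :=
  match a, b with
  | CIv x y _ _, CIv x' y' _ _ => x = x' /\ y = y'
  | CCh Z _, CCh Z' _ => forall t, Z t <-> Z' t
  | _, _ => False
  end.

Definition Cisid (a : CArr) : Prop :=
  match a with CIv x y _ _ => x = y | CCh _ _ => False end.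

Inductive Cmul : CArr -> CArr -> CArr -> Prop :=
| Cmul_iv : forall x y z h1 n1 h2 n2 h3 n3,
    Cmul (CIv x y h1 n1) (CIv y z h2 n2) (CIv x z h3 n3)
| Cmul_idl : forall h n Z hZ Z' hZ', (forall t, Z t <-> Z' t) ->
    Cmul (CIv u u h n) (CCh Z hZ) (CCh Z' hZ')
| Cmul_idr : forall h n Z hZ Z' hZ', (forall t, Z t <-> Z' t) ->
    Cmul (CCh Z hZ) (CIv v v h n) (CCh Z' hZ')
| Cmul_split : forall z h1 n1 h2 n2 Z hZ, lt le u z -> lt le z v -> Z z ->
    Cmul (CIv u z h1 n1) (CIv z v h2 n2) (CCh Z hZ).

Definition Ccat : ACat :=
  {| Arr := CArr; Ob := T; src := Csrc; tgt := Ctgt;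
     aeq := Caeq; isid := Cisid; mul := Cmul |}.
End CPuv.

Definition Umon_rel (C : ACat) (a b : list (Arr C)) : Prop :=
  (exists e, isid C e /\ a = [e] /\ b = []) \/
  (exists x y z, mul C x y z /\ a = [x; y] /\ b = [z]) \/
  (exists x y, aeq C x y /\ a = [x] /\ b = [y]).

(* Main.v *)
Require Import Defs.
From Stdlib Require Import List ClassicalEpsilon ProofIrrelevance FunctionalExtensionality PropExtensionality Classical.
Import ListNotations.
Set Implicit Arguments.
Unset Strict Implicit.

Record Good (C : ACat) : Prop := {
  g0 : forall a b, aeq C a b <-> a = b;
  g1 : forall a b c, mul C a b c -> tgt C a = src C b;
  g2 : forall a b, tgt C a = src C b -> exists c, mul C a b c;
  g3 : forall a b c c', mul C a b c -> mul C a b c' -> c = c';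
  g4 : forall a b c, mul C a b c -> src C c = src C a;
  g4' : forall a b c, mul C a b c -> tgt C c = tgt C b;
  g5 : forall e, isid C e -> src C e = tgt C e;
  g6 : forall a, exists e, isid C e /\ src C e = tgt C a;
  g6' : forall a, exists e, isid C e /\ src C e = src C a;
  g7 : forall e b, isid C e -> tgt C e = src C b -> mul C e b b;
  g7' : forall a e, isid C e -> tgt C a = src C e -> mul C a e a;
  g8 : forall a b c ab bc abc, mul C a b ab -> mul C b c bc -> mul C ab c abc -> mul C a bc abc;
  g9 : forall a b c, mul C a b c -> isid C c -> isid C a;
  g9' : forall a b c, mul C a b c -> isid C c -> isid C b }.

Definition EM (P : Prop) : {P} + {~P} := excluded_middle_informative P.

Lemma cong_ctx (G : Type) (R : list G -> list G -> Prop) a b p q :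
  cong R a b -> cong R (p ++ a ++ q) (p ++ b ++ q).
Proof.
  induction 1.
  - replace (p ++ (p0 ++ a ++ q0) ++ q) with ((p ++ p0) ++ a ++ (q0 ++ q)) by (repeat rewrite <- app_assoc; reflexivity).
    replace (p ++ (p0 ++ b ++ q0) ++ q) with ((p ++ p0) ++ b ++ (q0 ++ q)) by (repeat rewrite <- app_assoc; reflexivity).
    apply cong_base; auto.
  - apply cong_refl.
  - apply cong_sym; auto.
  - eapply cong_trans; eauto.
Qed.

Lemma cong_one (G : Type) (R : list G -> list G -> Prop) a b : R a b -> cong R a b.
Proof. intro H. pose proof (cong_base (R:=R) [] [] H). simpl in H0. rewrite !app_nil_r in H0. exact H0. Qed.

Section Generic.
Variable C : ACat.
Hypothesis G : Good C.
Notation A := (Arr C).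
Notation sr := (src C).
Notation tg := (tgt C).
Notation mu := (mul C).
Notation ii := (isid C).
Notation R := (@Umon_rel C).

Definition comp (a b : A) : A :=
  match EM (exists c, mu a b c) with
  | left H => proj1_sig (constructive_indefinite_description _ H)
  | right _ => a end.

Lemma comp_spec a b : tg a = sr b -> mu a b (comp a b).
Proof. intro H. unfold comp. destruct (EM _) as [H1|H1].
 - exact (proj2_sig (constructive_indefinite_description _ H1)).
 - exfalso; apply H1; apply (g2 G); auto. Qed.

Lemma comp_eq a b c : mu a b c -> comp a b = c.
Proof. intro H. apply (g3 G) with a b; [apply comp_spec; eapply (g1 G); eauto | exact H]. Qed.

Definition cns (x : A) (w : list A) : list A :=
  if EM (ii x) then w else
  match w with
  | [] => [x]
  | y :: w' => if EM (tg x = sr y) then comp x y :: w' else x :: w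
  end.

Fixpoint normal (w : list A) : Prop :=
  match w with
  | [] => True
  | x :: w' => ~ ii x /\ normal w' /\ match w' with [] => True | y :: _ => tg x <> sr y end
  end.

Definition nf (l : list A) := fold_right cns [] l.

Lemma comp_nid x y : ~ ii x -> tg x = sr y -> ~ ii (comp x y).
Proof. intros H1 H2 H3. apply H1. eapply (g9 G). apply comp_spec; eauto. auto. Qed.

Lemma cns_normal x w : normal w -> normal (cns x w).
Proof.
  intro Hw. unfold cns. destruct (EM (ii x)); auto.
  destruct w as [|y w']. simpl; auto.
  destruct (EM (tg x = sr y)) as [E|E].
  - simpl in Hw |- *. destruct Hw as (H1 & H2 & H3). split; [apply comp_nid; auto|]. split; auto.
    destruct w'; auto. rewrite (g4' G (comp_spec E)). auto.
  - simpl in *. tauto.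
Qed.

Lemma fold_normal W l : normal W -> normal (fold_right cns W l).
Proof. intro H; induction l; simpl; auto using cns_normal. Qed.

Lemma nf_normal l : normal (nf l).
Proof. apply fold_normal; simpl; auto. Qed.

Lemma cns_norm_id x w : normal (x :: w) -> cns x w = x :: w.
Proof.
  intros (H1 & H2 & H3). unfold cns. destruct (EM (ii x)); [tauto|].
  destruct w as [|y w']; auto. destruct (EM _); tauto.
Qed.

Lemma normal_nf w : normal w -> nf w = w.
Proof.
  induction w; simpl; auto. intro H. pose proof H as H'. destruct H as (_ & H2 & _).
  rewrite IHw; auto. apply cns_norm_id; auto.
Qed.

Lemma cns_id e w : ii e -> cns e w = w.
Proof. intro H. unfold cns. destruct (EM (ii e)); tauto. Qed.

Lemma comp_idl e y : ii e -> tg e = sr y -> comp e y = y.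
Proof. intros. apply comp_eq. apply (g7 G); auto. Qed.
Lemma comp_idr x e : ii e -> tg x = sr e -> comp x e = x.
Proof. intros. apply comp_eq. apply (g7' G); auto. Qed.

Lemma comp_assoc x y z : tg x = sr y -> tg y = sr z -> comp x (comp y z) = comp (comp x y) z.
Proof.
  intros E1 E2. apply comp_eq. eapply (g8 G).
  - apply (comp_spec E1).
  - apply (comp_spec E2).
  - apply comp_spec. rewrite (g4' G (comp_spec E1)). auto.
Qed.

Lemma cns_assoc x y w : normal w -> tg x = sr y -> cns x (cns y w) = cns (comp x y) w.
Proof.
  intros Hw E.
  destruct (EM (ii x)) as [Ix|Ix].
  { rewrite cns_id; auto. rewrite comp_idl; auto. }
  destruct (EM (ii y)) as [Iy|Iy].
  { rewrite (cns_id w Iy). rewrite comp_idr; auto. }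
  assert (Hxy : ~ ii (comp x y)) by (apply comp_nid; auto).
  assert (Txy : tg (comp x y) = tg y) by exact (g4' G (comp_spec E)).
  assert (Sxy : sr (comp x y) = sr x) by exact (g4 G (comp_spec E)).
  unfold cns at 2. destruct (EM (ii y)); [tauto|].
  destruct w as [|z w'].
  - unfold cns. destruct (EM (ii x)); [tauto|]. destruct (EM (tg x = sr y)); [|tauto].
    destruct (EM (ii (comp x y))); tauto.
  - destruct (EM (tg y = sr z)) as [E2|E2].
    + unfold cns. destruct (EM (ii x)); [tauto|].
      destruct (EM (tg x = sr (comp y z))) as [E3|E3].
      2:{ exfalso; apply E3. rewrite (g4 G (comp_spec E2)); auto. }
      destruct (EM (ii (comp x y))); [tauto|].
      destruct (EM (tg (comp x y) = sr z)) as [E4|E4]; [|congruence].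
      rewrite comp_assoc; auto.
    + unfold cns. destruct (EM (ii x)); [tauto|].
      destruct (EM (tg x = sr y)) as [_|]; [|tauto].
      destruct (EM (ii (comp x y))); [tauto|].
      destruct (EM (tg (comp x y) = sr z)); [congruence|]. auto.
Qed.


Definition ldC (g a : A) := exists y, mu g y a.

Lemma ldC_refl c : ldC c c.
Proof. destruct (g6 G c) as (e & He & Ee). exists e. apply (g7' G); auto. Qed.

Lemma ldC_src g a : ldC g a -> sr a = sr g.
Proof. intros (y & H). exact (g4 G H). Qed.


Lemma cns_head x w : ~ ii x -> normal w -> exists c a', cns x w = c :: a' /\ ldC x c /\ normal (c :: a').
Proof.
  intros Ix Hw. pose proof (cns_normal x Hw) as Hn.
  unfold cns in *. destruct (EM (ii x)); [tauto|].
  destruct w as [|y w'].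
  - exists x, []. split; [reflexivity|split; [apply ldC_refl|exact Hn]].
  - destruct (EM (tg x = sr y)) as [E|E].
    + exists (comp x y), w'. split; [reflexivity|split; [|exact Hn]]. exists y. apply comp_spec; auto.
    + exists x, (y :: w'). split; [reflexivity|split; [apply ldC_refl|exact Hn]].
Qed.

Lemma fold_normal_app g w : normal (g ++ w) -> fold_right cns w g = g ++ w.
Proof.
  induction g; simpl; auto. intro H. pose proof H as H0. destruct H as (_ & H & _).
  rewrite IHg; auto. apply cns_norm_id; auto.
Qed.

Lemma normal_app_l a b : normal (a ++ b) -> normal a.
Proof.
  induction a as [|x a IH]; simpl; auto. intros (H1 & H2 & H3). repeat split; auto.
  destruct a; simpl in *; auto.
Qed.

Lemma normal_app_r a b : normal (a ++ b) -> normal b.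
Proof. induction a; simpl; auto. tauto. Qed.

Lemma normal_replace g y y' w : normal (g ++ [y]) -> normal (y' :: w) -> sr y' = sr y -> normal (g ++ y' :: w).
Proof.
  induction g as [|x g IH]; simpl; auto. intros (H1 & H2 & H3) Hn E. repeat split; auto.
  destruct g; simpl in *; congruence.
Qed.

Lemma cns_nil x : ~ ii x -> cns x [] = [x].
Proof. intro I. unfold cns. destruct (EM (ii x)); tauto. Qed.
Lemma cns_merge x y w : ~ ii x -> tg x = sr y -> cns x (y :: w) = comp x y :: w.
Proof. intros I E. unfold cns. destruct (EM (ii x)); [tauto|]. destruct (EM _); tauto. Qed.
Lemma cns_nomerge x y w : ~ ii x -> tg x <> sr y -> cns x (y :: w) = x :: y :: w.
Proof. intros I E. unfold cns. destruct (EM (ii x)); [tauto|]. destruct (EM _); tauto. Qed.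

Lemma cns_fold x v W : normal v -> normal W -> fold_right cns W (cns x v) = cns x (fold_right cns W v).
Proof.
  intros Hv HW. destruct (EM (ii x)) as [Ix|Ix].
  { rewrite !cns_id; auto. }
  destruct v as [|y v'].
  - rewrite cns_nil; auto.
  - destruct (EM (tg x = sr y)) as [E|E].
    + rewrite cns_merge; auto. simpl. rewrite cns_assoc; auto. apply fold_normal; auto.
    + rewrite cns_nomerge; auto.
Qed.

Lemma fold_nf W l : normal W -> fold_right cns W l = fold_right cns W (nf l).
Proof.
  intro HW. induction l as [|x l IH]; simpl; auto.
  rewrite cns_fold; auto. rewrite IH; auto. apply nf_normal.
Qed.

Lemma nf_app a b : nf (a ++ b) = fold_right cns (nf b) (nf a).
Proof. unfold nf at 1. rewrite fold_right_app. apply fold_nf. apply nf_normal. Qed.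

Lemma cong_nf a b : cong R a b -> nf a = nf b.
Proof.
  induction 1; try congruence.
  unfold nf. rewrite !fold_right_app. f_equal.
  assert (HW : normal (fold_right cns [] q)) by apply nf_normal.
  generalize dependent (fold_right cns [] q). intros W HW.
  destruct H as [(e & He & -> & ->)|[(x & y & z & Hm & -> & ->)|(x & y & Hxy & -> & ->)]].
  - simpl. apply cns_id; auto.
  - simpl. rewrite cns_assoc; auto. 2: exact (g1 G Hm). rewrite (comp_eq Hm). auto.
  - apply (g0 G) in Hxy. subst; auto.
Qed.

Lemma cong_cns x w : cong R (x :: w) (cns x w).
Proof.
  unfold cns. destruct (EM (ii x)) as [I|I].
  - assert (Hr : R [x] []) by (left; eauto).
    exact (cong_base [] w Hr).
  - destruct w as [|y w']. apply cong_refl.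
    destruct (EM _) as [E|E]; [|apply cong_refl].
    assert (Hr : R [x; y] [comp x y]).
    { right. left. exists x, y, (comp x y). split; auto. apply comp_spec; auto. }
    exact (cong_base [] w' Hr).
Qed.

Lemma nf_cong l : cong R l (nf l).
Proof.
  induction l as [|x l IH]; simpl. apply cong_refl.
  apply cong_trans with (x :: nf l).
  - pose proof (cong_ctx [x] [] IH) as H. rewrite !app_nil_r in H. exact H.
  - apply cong_cns.
Qed.

Lemma cong_iff a b : cong R a b <-> nf a = nf b.
Proof.
  split. apply cong_nf. intro H. eapply cong_trans. apply nf_cong. rewrite H. apply cong_sym, nf_cong.
Qed.


Definition D (g a : list A) := g = [] \/ exists g' gl c a', g = g' ++ [gl] /\ a = g' ++ c :: a' /\ ldC gl c.

Lemma LD1 g x : normal g -> normal x -> D g (fold_right cns x g).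
Proof.
  intros Hg Hx. destruct g as [|g1 g0] using rev_ind. left; auto.
  right.
  assert (Il : ~ ii g1).
  { pose proof (normal_app_r Hg) as H. simpl in H. tauto. }
  destruct (cns_head Il Hx) as (c & a' & E & Hl & Hn).
  exists g0, g1, c, a'. split; auto. split; auto.
  rewrite fold_right_app. simpl. rewrite E. apply fold_normal_app.
  eapply normal_replace; eauto. apply (ldC_src Hl).
Qed.

Lemma LD2 g a : normal g -> normal a -> D g a -> exists x, normal x /\ fold_right cns x g = a.
Proof.
  intros Hg Ha [->|(g' & gl & c & a' & -> & -> & y & Hm)].
  - exists a. auto.
  - assert (Il : ~ ii gl).
    { pose proof (normal_app_r Hg) as H. simpl in H. tauto. }
    assert (Hca : normal (c :: a')) by exact (normal_app_r Ha).
    assert (Ec : forall x, cns gl x = c :: a' -> fold_right cns x (g' ++ [gl]) = g' ++ c :: a').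
    { intros x Ex. rewrite fold_right_app. simpl. rewrite Ex. apply fold_normal_app; auto. }
    destruct (EM (ii y)) as [Iy|Iy].
    + assert (c = gl). { apply (g3 G Hm). apply (g7' G); auto. exact (g1 G Hm). }
      subst c. exists a'. split. simpl in Hca; tauto. apply Ec. apply cns_norm_id; auto.
    + exists (y :: a'). assert (Hy : normal (y :: a')).
      { simpl in Hca |- *. destruct Hca as (_ & H2 & H3). repeat split; auto.
        destruct a'; auto. rewrite <- (g4' G Hm). auto. }
      split; auto. apply Ec. rewrite cns_merge; auto. rewrite (comp_eq Hm). auto. exact (g1 G Hm).
Qed.

Lemma ldivU_iff g a : @ldiv (monoid_cat R) g a <-> D (nf g) (nf a).
Proof.
  split.
  - intros (x & c & Hc & Hca). simpl in Hc, Hca. subst c.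
    apply cong_iff in Hca. rewrite <- Hca. rewrite nf_app. apply LD1; apply nf_normal.
  - intro H. destruct (LD2 (nf_normal g) (nf_normal a) H) as (x & Hx & E).
    exists x, (g ++ x). split. reflexivity. simpl. apply cong_iff. rewrite nf_app.
    rewrite (normal_nf Hx). auto.
Qed.

Lemma D_nil a : D [] a.
Proof. left; auto. Qed.

Lemma D_nil_r h : D h [] -> h = [].
Proof. intros [H|(g' & gl & c & a' & _ & E & _)]; auto. destruct g'; discriminate. Qed.

Lemma D_cons h c a : D h (c :: a) -> h = [] \/ (exists hl, h = [hl] /\ ldC hl c) \/
   (exists h0, h = c :: h0 /\ h0 <> [] /\ D h0 a).
Proof.
  intros [H|(g' & gl & c' & a' & E1 & E2 & L)]; auto. right.
  destruct g' as [|x g''].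
  - left. simpl in *. injection E2; intros; subst. eauto.
  - right. simpl in *. injection E2; intros; subst. exists (g'' ++ [gl]). split; auto. split.
    destruct g''; discriminate. right. exists g'', gl, c', a'. auto.
Qed.

Lemma D_intro1 hl c a : ldC hl c -> D [hl] (c :: a).
Proof. intro H. right. exists [], hl, c, a. auto. Qed.

Lemma D_intro2 h0 c a : D h0 a -> h0 <> [] -> D (c :: h0) (c :: a).
Proof.
  intros [->|(g' & gl & c' & a' & E1 & E2 & L)] N. congruence.
  right. exists (c :: g'), gl, c', a'. subst. auto.
Qed.

Lemma D_head g a x g1 : D g a -> g = x :: g1 -> exists y a1, a = y :: a1 /\ sr x = sr y.
Proof.
  intros [->|(g' & gl & c & a' & E1 & E2 & L)] E. discriminate.
  subst. destruct g' as [|z g''].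
  - simpl in *. injection E; intros; subst. exists c, a'. split; auto. symmetry; apply (ldC_src L).
  - simpl in *. injection E; intros; subst. eauto.
Qed.

Lemma ldC_iff g a : @ldiv C g a <-> ldC g a.
Proof.
  split.
  - intros (x & c & H & E). apply (g0 G) in E. subst. exists x; auto.
  - intros (x & H). exists x, a. split; auto. apply (g0 G). auto.
Qed.

Lemma ldC_id_l e a : ii e -> sr e = sr a -> ldC e a.
Proof. intros I E. exists a. apply (g7 G); auto. rewrite <- (g5 G I). auto. Qed.

Lemma gcd_words : left_gcds C -> forall a b, normal a -> normal b -> exists g, normal g /\ D g a /\ D g b /\
   forall h, normal h -> D h a -> D h b -> D h g.
Proof.
  intros LG a. induction a as [|c a' IH]; intros b Ha Hb.
  { exists []. split; [exact I|split; [apply D_nil|split; [apply D_nil|]]]. intros h _ H _. rewrite (D_nil_r H). apply D_nil. }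
  destruct b as [|d b'].
  { exists []. split; [exact I|split; [apply D_nil|split; [apply D_nil|]]]. intros h _ _ H. rewrite (D_nil_r H). apply D_nil. }
  assert (Ha' : normal a') by (simpl in Ha; tauto).
  assert (Hb' : normal b') by (simpl in Hb; tauto).
  destruct (classic (c = d)) as [<-|Ncd].
  - destruct (IH b' Ha' Hb') as (g0 & Hg0 & Da & Db & Gr).
    destruct (classic (g0 = [])) as [->|N0].
    + exists [c]. split. simpl in Ha |- *; tauto. split. apply D_intro1, ldC_refl. split. apply D_intro1, ldC_refl.
      intros h Hh D1 D2. destruct (D_cons D1) as [->|[(hl & -> & L)|(h0 & -> & N & Dh)]].
      apply D_nil. apply D_intro1; auto.
      destruct (D_cons D2) as [E|[(hl & E & L)|(h1 & E & N1 & Dh1)]]; try discriminate.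
      injection E; intros; subst. congruence.
      injection E; intros; subst. exfalso. apply N. apply D_nil_r. apply Gr; auto. simpl in Hh; tauto.
    + exists (c :: g0). split.
      { simpl. split. simpl in Ha; tauto. split; auto. destruct g0 as [|x g1]. congruence.
        destruct (D_head Da eq_refl) as (y & a1 & -> & E). rewrite E. simpl in Ha. tauto. }
      split. apply D_intro2; auto. split. apply D_intro2; auto.
      intros h Hh D1 D2. destruct (D_cons D1) as [->|[(hl & -> & L)|(h0 & -> & N & Dh)]].
      apply D_nil. apply D_intro1; auto.
      destruct (D_cons D2) as [E|[(hl & E & L)|(h1 & E & N1 & Dh1)]]; try discriminate.
      injection E; intros; subst. congruence.
      injection E; intros; subst. apply D_intro2; auto. apply Gr; auto. simpl in Hh; tauto.
  - destruct (classic (sr c = sr d)) as [Es|Ns].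
    + destruct (LG c d Es) as (e & L1 & L2 & Gr). apply ldC_iff in L1. apply ldC_iff in L2.
      destruct (EM (ii e)) as [Ie|Ie].
      * exists []. split; simpl; auto. split. apply D_nil. split. apply D_nil.
        intros h Hh D1 D2. destruct (D_cons D1) as [->|[(hl & -> & L)|(h0 & -> & N & Dh)]].
        apply D_nil.
        destruct (D_cons D2) as [E|[(hl' & E & L')|(h1 & E & N1 & Dh1)]]; try discriminate.
        injection E; intros; subst. exfalso. simpl in Hh. destruct Hh as (Hh & _). apply Hh.
        assert (L3 : ldiv hl' e) by (apply Gr; apply ldC_iff; auto).
        apply ldC_iff in L3. destruct L3 as (z & Hz). exact (g9 G Hz Ie).
        injection E; intros; subst. congruence.
        destruct (D_cons D2) as [E|[(hl' & E & L')|(h1 & E & N1 & Dh1)]]; try discriminate.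
        injection E; intros; subst. congruence.
        injection E; intros; subst. congruence.
      * exists [e]. split. simpl; tauto. split. apply D_intro1; auto. split. apply D_intro1; auto.
        intros h Hh D1 D2. destruct (D_cons D1) as [->|[(hl & -> & L)|(h0 & -> & N & Dh)]].
        apply D_nil.
        destruct (D_cons D2) as [E|[(hl' & E & L')|(h1 & E & N1 & Dh1)]]; try discriminate.
        injection E; intros; subst. apply D_intro1. apply ldC_iff. apply Gr; apply ldC_iff; auto.
        injection E; intros; subst. congruence.
        destruct (D_cons D2) as [E|[(hl' & E & L')|(h1 & E & N1 & Dh1)]]; try discriminate.
        injection E; intros; subst. congruence.
        injection E; intros; subst. congruence.
    + exists []. split; simpl; auto. split. apply D_nil. split. apply D_nil.
      intros h Hh D1 D2. destruct (D_cons D1) as [->|[(hl & -> & L)|(h0 & -> & N & Dh)]].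
      apply D_nil.
      destruct (D_cons D2) as [E|[(hl' & E & L')|(h1 & E & N1 & Dh1)]]; try discriminate.
      injection E; intros; subst. exfalso. apply Ns. rewrite (ldC_src L), (ldC_src L'). auto.
      injection E; intros; subst. congruence.
      destruct (D_cons D2) as [E|[(hl' & E & L')|(h1 & E & N1 & Dh1)]]; try discriminate.
      injection E; intros; subst. congruence.
      injection E; intros; subst. congruence.
Qed.

Lemma cns_inj x V W : ~ ii x -> normal V -> normal W -> left_cancellative C -> cns x V = cns x W -> V = W.
Proof.
  intros Ix HV HW LC E.
  assert (LC' : forall y y' c, mu x y c -> mu x y' c -> y = y').
  { intros y y' c H1 H2. apply (g0 G). eapply LC; eauto; apply (g0 G); auto. }
  destruct (g6 G x) as (e & Ie & Ee).
  assert (Hxe : mu x e x) by (apply (g7' G); auto).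
  assert (K : forall y w, normal (y :: w) -> tg x = sr y -> comp x y <> x).
  { intros y w Hy Ey Ec. simpl in Hy. destruct Hy as (Hy & _). apply Hy.
    assert (y = e) by (apply (LC' y e x); auto; rewrite <- Ec at 2; apply comp_spec; auto). subst; auto. }
  destruct V as [|y V']; destruct W as [|z W'].
  - auto.
  - rewrite cns_nil in E; auto. destruct (EM (tg x = sr z)) as [Ez|Ez].
    + rewrite cns_merge in E; auto. injection E; intros. exfalso; apply (K z W'); auto.
    + rewrite cns_nomerge in E; auto. discriminate.
  - rewrite (cns_nil Ix) in E. destruct (EM (tg x = sr y)) as [Ey|Ey].
    + rewrite cns_merge in E; auto. injection E; intros. exfalso; apply (K y V'); auto.
    + rewrite cns_nomerge in E; auto. discriminate.
  - destruct (EM (tg x = sr y)) as [Ey|Ey]; destruct (EM (tg x = sr z)) as [Ez|Ez].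
    + rewrite !cns_merge in E; auto. injection E; intros E1 E2. subst.
      f_equal. apply (LC' y z (comp x z)). rewrite <- E2. apply comp_spec; auto. apply comp_spec; auto.
    + rewrite cns_merge, cns_nomerge in E; auto. injection E; intros. exfalso; apply (K y V'); auto.
    + rewrite cns_nomerge, cns_merge in E; auto. injection E; intros. exfalso; apply (K z W'); auto.
    + rewrite !cns_nomerge in E; auto. injection E; intros. subst. auto.
Qed.

Lemma fold_inj A0 X Y : left_cancellative C -> normal A0 -> normal X -> normal Y ->
  fold_right cns X A0 = fold_right cns Y A0 -> X = Y.
Proof.
  intros LC. induction A0 as [|x A1 IH]; simpl; auto. intros (Ix & HA & _) HX HY E.
  apply IH; auto. eapply cns_inj; eauto; apply fold_normal; auto.
Qed.

Lemma fold_nonempty A0 X : normal A0 -> A0 <> [] -> fold_right cns X A0 <> [].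
Proof.
  intros HA N. destruct A0 as [|x A1]. congruence. simpl.
  simpl in HA. destruct HA as (Ix & _).
  destruct (EM (ii x)); [tauto|].
  intro E. destruct (fold_right cns X A1) eqn:F.
  - rewrite cns_nil in E; auto. discriminate.
  - destruct (EM (tg x = sr a)). rewrite cns_merge in E; auto; discriminate.
    rewrite cns_nomerge in E; auto; discriminate.
Qed.

Lemma U_left : left_cancellative C -> left_gcds C ->
  conical (monoid_cat R) /\ left_cancellative (monoid_cat R) /\ left_gcds (monoid_cat R).
Proof.
  intros LC LG. split; [|split].
  - intros x y e He Ie. simpl in *. subst e. apply cong_iff. apply cong_iff in Ie. simpl in Ie |- *.
    rewrite nf_app in Ie. destruct (nf x) eqn:F. auto. exfalso.
    apply (@fold_nonempty (a :: l) (nf y)). rewrite <- F. apply nf_normal. discriminate. auto.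
  - intros a a' x y c d Hc Hd Ha Hcd. simpl in *. subst. apply cong_iff. apply cong_iff in Ha, Hcd.
    rewrite !nf_app in Hcd. rewrite Ha in Hcd. eapply fold_inj; eauto; apply nf_normal.
  - intros a b _. destruct (gcd_words LG (nf_normal a) (nf_normal b)) as (g & Hg & D1 & D2 & Gr).
    exists g. rewrite !ldivU_iff. rewrite (normal_nf Hg). split; auto. split; auto.
    intros h H1 H2. rewrite ldivU_iff in H1, H2 |- *. rewrite (normal_nf Hg). apply Gr; auto. apply nf_normal.
Qed.

Lemma nf_single x : ~ ii x -> nf [x] = [x].
Proof. intro I. simpl. apply cns_nil; auto. Qed.

Lemma C_left_from_U : left_gcds (monoid_cat R) -> forall a b, sr a = sr b ->
  exists g, ldC g a /\ ldC g b /\ forall h, ldC h a -> ldC h b -> ldC h g.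
Proof.
  intros LG a b E.
  destruct (EM (ii a)) as [Ia|Ia].
  { exists a. split. apply ldC_refl. split. apply ldC_id_l; auto. auto. }
  destruct (EM (ii b)) as [Ib|Ib].
  { exists b. split. apply ldC_id_l; auto. split. apply ldC_refl. auto. }
  destruct (LG [a] [b] eq_refl) as (g & L1 & L2 & Gr).
  rewrite ldivU_iff, nf_single in L1, L2 by auto.
  assert (Hn : forall h, ~ ii h -> ldC h a -> ldC h b -> D [h] (nf g)).
  { intros h Ih H1 H2. rewrite <- (nf_single Ih). apply ldivU_iff. apply Gr; apply ldivU_iff;
    rewrite !nf_single; auto; apply D_intro1; auto. }
  destruct (nf g) as [|gl g'] eqn:F.
  - destruct (g6' G a) as (e & Ie & Ee). exists e. split. apply ldC_id_l; auto. split. apply ldC_id_l; congruence.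
    intros h H1 H2. destruct (EM (ii h)) as [Ih|Ih].
    + exists e. apply (g7 G); auto. rewrite <- (g5 G Ih). rewrite Ee. symmetry. apply ldC_src; auto.
    + exfalso. pose proof (Hn h Ih H1 H2) as H. apply D_nil_r in H. discriminate.
  - destruct (D_cons L1) as [E1|[(hl & E1 & L)|(h0 & E1 & N & D0)]]; try discriminate.
    2:{ apply D_nil_r in D0. congruence. }
    injection E1; intros; subst. 
    destruct (D_cons L2) as [E2|[(hl' & E2 & L')|(h0 & E2 & N & D0)]]; try discriminate.
    2:{ apply D_nil_r in D0. congruence. }
    injection E2; intros; subst.
    exists hl'. split; auto. split; auto. intros h H1 H2. destruct (EM (ii h)) as [Ih|Ih].
    + apply ldC_id_l; auto. rewrite <- (ldC_src H1). apply (ldC_src L).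
    + pose proof (Hn h Ih H1 H2) as H. destruct (D_cons H) as [E3|[(hl2 & E3 & L3)|(h0 & E3 & N & D3)]]; try discriminate.
      injection E3; intros; subst; auto.
      injection E3; intros; subst. apply D_nil_r in D3. congruence.
Qed.

End Generic.

Definition opC (C : ACat) : ACat :=
  {| Arr := Arr C; Ob := Ob C; src := tgt C; tgt := src C; aeq := aeq C; isid := isid C;
     mul := fun a b c => mul C b a c |}.

Lemma good_op C : Good C -> Good (opC C).
Proof.
  intro G. destruct G as [G0 G1 G2 G3 G4 G4' G5 G6 G6' G7 G7' G8 G9 G9'].
  constructor; simpl.
  - exact G0.
  - intros a b c H. symmetry. eapply G1; eauto.
  - intros a b H. apply G2. auto.
  - exact (fun a b => G3 b a).
  - intros a b c H. eapply G4'; eauto.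
  - intros a b c H. eapply G4; eauto.
  - intros e I. symmetry; auto.
  - intros a. destruct (G6' a) as (e & I & E). exists e. split; auto. rewrite <- G5; auto.
  - intros a. destruct (G6 a) as (e & I & E). exists e. split; auto. rewrite <- G5; auto.
  - intros e b I E. apply G7'; auto. 
  - intros a e I E. apply G7; auto. 
  - intros a b c ab bc abc H1 H2 H3.
    destruct (G2 bc a) as [w Hw]. rewrite (G4' _ _ _ H2). eapply G1; eauto.
    assert (H4 := G8 _ _ _ _ _ _ H2 H1 Hw). rewrite (G3 _ _ _ _ H3 H4). auto.
  - intros a b c H I. eapply G9'; eauto.
  - intros a b c H I. eapply G9; eauto.
Qed.

Lemma cong_rev_gen (X : Type) (R1 R2 : list X -> list X -> Prop) :
  (forall a b, R1 a b -> R2 (rev a) (rev b)) -> forall a b, cong R1 a b -> cong R2 (rev a) (rev b).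
Proof.
  intros H a b Hc. induction Hc.
  - rewrite !rev_app_distr. rewrite <- !app_assoc. apply cong_base. auto.
  - apply cong_refl.
  - apply cong_sym; auto.
  - eapply cong_trans; eauto.
Qed.

Lemma umon_rev1 C a b : @Umon_rel C a b -> @Umon_rel (opC C) (rev a) (rev b).
Proof.
  intros [(e & I & -> & ->)|[(x & y & z & H & -> & ->)|(x & y & H & -> & ->)]]; simpl.
  - left. eauto.
  - right; left. exists y, x, z. auto.
  - right; right. exists x, y. auto.
Qed.

Lemma umon_rev2 C a b : @Umon_rel (opC C) a b -> @Umon_rel C (rev a) (rev b).
Proof.
  intros [(e & I & -> & ->)|[(x & y & z & H & -> & ->)|(x & y & H & -> & ->)]]; simpl.
  - left. eauto.
  - right; left. exists y, x, z. auto.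
  - right; right. exists x, y. auto.
Qed.

Lemma cong_rev_op C a b : cong (@Umon_rel C) a b <-> cong (@Umon_rel (opC C)) (rev a) (rev b).
Proof.
  split; intro H.
  - apply (cong_rev_gen (@umon_rev1 C)); auto.
  - rewrite <- (rev_involutive a), <- (rev_involutive b). apply (cong_rev_gen (@umon_rev2 C)); auto.
Qed.

Section Rev.
Variables (X : Type) (R R' : list X -> list X -> Prop).
Hypothesis Hr : forall a b, cong R a b <-> cong R' (rev a) (rev b).

Lemma Hr' a b : cong R' a b <-> cong R (rev a) (rev b).
Proof. rewrite Hr, !rev_involutive. tauto. Qed.

Lemma rc_from : left_cancellative (monoid_cat R') -> right_cancellative (monoid_cat R).
Proof.
  intros LC a a' x y c d Hc Hd Ha Hcd. simpl in *. subst. apply Hr.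
  apply Hr in Ha. apply Hr in Hcd. rewrite !rev_app_distr in Hcd.
  eapply (LC (rev a) (rev a') (rev x) (rev y)); simpl; eauto.
Qed.

Lemma rg_from : left_gcds (monoid_cat R') -> right_gcds (monoid_cat R).
Proof.
  intros LG a b _. destruct (LG (rev a) (rev b) eq_refl) as (g & (x1 & c1 & E1 & C1) & (x2 & c2 & E2 & C2) & Gr).
  simpl in *. subst. exists (rev g). split; [|split].
  - exists (rev x1), (rev x1 ++ rev g). split; [reflexivity|]. simpl. apply Hr. rewrite rev_app_distr, !rev_involutive. auto.
  - exists (rev x2), (rev x2 ++ rev g). split; [reflexivity|]. simpl. apply Hr. rewrite rev_app_distr, !rev_involutive. auto.
  - intros h (y1 & d1 & F1 & D1) (y2 & d2 & F2 & D2). simpl in *. subst.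
    destruct (Gr (rev h)) as (z & e & F & De).
    + exists (rev y1), (rev h ++ rev y1). split; [reflexivity|]. simpl. rewrite <- rev_app_distr. apply Hr. auto.
    + exists (rev y2), (rev h ++ rev y2). split; [reflexivity|]. simpl. rewrite <- rev_app_distr. apply Hr. auto.
    + simpl in *. subst. exists (rev z), (rev z ++ h). split; [reflexivity|]. simpl. apply Hr.
      rewrite rev_app_distr, !rev_involutive. auto.
Qed.

Lemma lg_from_r : right_gcds (monoid_cat R) -> left_gcds (monoid_cat R').
Proof.
  intros RG a b _. destruct (RG (rev a) (rev b) eq_refl) as (g & (x1 & c1 & E1 & C1) & (x2 & c2 & E2 & C2) & Gr).
  simpl in *. subst. exists (rev g). split; [|split].
  - exists (rev x1), (rev g ++ rev x1). split; [reflexivity|]. simpl. apply Hr'. rewrite rev_app_distr, !rev_involutive. auto.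
  - exists (rev x2), (rev g ++ rev x2). split; [reflexivity|]. simpl. apply Hr'. rewrite rev_app_distr, !rev_involutive. auto.
  - intros h (y1 & d1 & F1 & D1) (y2 & d2 & F2 & D2). simpl in *. subst.
    destruct (Gr (rev h)) as (z & e & F & De).
    + exists (rev y1), (rev y1 ++ rev h). split; [reflexivity|]. simpl. rewrite <- rev_app_distr. apply Hr'. auto.
    + exists (rev y2), (rev y2 ++ rev h). split; [reflexivity|]. simpl. rewrite <- rev_app_distr. apply Hr'. auto.
    + simpl in *. subst. exists (rev z), (h ++ rev z). split; [reflexivity|]. simpl. apply Hr'.
      rewrite rev_app_distr, !rev_involutive. auto.
Qed.
End Rev.

Lemma U_gcd C : Good C -> is_gcd_category C -> is_gcd_monoid (@Umon_rel C).
Proof.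
  intros G (Co & LC & RC & LG & RG).
  destruct (U_left G LC LG) as (UCo & ULC & ULG).
  destruct (U_left (good_op G) RC RG) as (_ & ULC' & ULG').
  unfold is_gcd_monoid, is_gcd_category. split; auto. split; auto. split.
  - eapply rc_from; eauto. apply cong_rev_op.
  - split; auto. eapply rg_from; eauto. apply cong_rev_op.
Qed.

Lemma C_lr_from_U C : Good C -> is_gcd_monoid (@Umon_rel C) ->
  (forall a b, src C a = src C b ->
    exists g, ldC g a /\ ldC g b /\ forall h, ldC h a -> ldC h b -> ldC h g) /\
  (forall a b, tgt C a = tgt C b ->
    exists g, @ldC (opC C) g a /\ @ldC (opC C) g b /\ forall h, @ldC (opC C) h a -> @ldC (opC C) h b -> @ldC (opC C) h g).
Proof.
  intros G (_ & _ & _ & LG & RG). split.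
  - apply C_left_from_U; auto.
  - intros a b E. apply (C_left_from_U (good_op G)); auto. exact (lg_from_r (@cong_rev_op C) RG).
Qed.

Lemma gcd_transfer (X : Type) (R1 R2 : list X -> list X -> Prop) :
  (forall a b, R1 a b -> cong R2 a b) -> (forall a b, R2 a b -> cong R1 a b) ->
  is_gcd_monoid R1 -> is_gcd_monoid R2.
Proof.
  intros H12 H21.
  assert (K : forall (Ra Rb : list X -> list X -> Prop), (forall a b, Ra a b -> cong Rb a b) -> forall a b, cong Ra a b -> cong Rb a b).
  { intros Ra Rb H a b Hc. induction Hc.
    - apply cong_ctx. auto.
    - apply cong_refl. - apply cong_sym; auto. - eapply cong_trans; eauto. }
  assert (E : forall a b, cong R1 a b <-> cong R2 a b) by (split; apply K; auto).
  intros (Co & LC & RC & LG & RG). unfold is_gcd_monoid, is_gcd_category in *.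
  unfold conical, left_cancellative, right_cancellative, left_gcds, right_gcds, ldiv, rdiv in *; simpl in *.
  repeat split.
  - intros x y e H I. apply E. eapply Co. exact H. apply E; auto.
  - intros a a' x y c d H1 H2 H3 H4. apply E. eapply LC. exact H1. exact H2. apply E; auto. apply E; auto.
  - intros a a' x y c d H1 H2 H3 H4. apply E. eapply RC. exact H1. exact H2. apply E; auto. apply E; auto.
  - intros a b _. destruct (LG a b eq_refl) as (g & (x1 & c1 & H1 & C1) & (x2 & c2 & H2 & C2) & Gr).
    exists g. split; [exists x1, c1; split; [auto|apply E; auto]|split; [exists x2, c2; split; [auto|apply E; auto]|]].
    intros h (y1 & d1 & F1 & D1) (y2 & d2 & F2 & D2).
    destruct (Gr h (ex_intro _ y1 (ex_intro _ d1 (conj F1 (proj2 (E _ _) D1)))) (ex_intro _ y2 (ex_intro _ d2 (conj F2 (proj2 (E _ _) D2))))) as (z & e & F & De).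
    exists z, e. split; auto. apply E; auto.
  - intros a b _. destruct (RG a b eq_refl) as (g & (x1 & c1 & H1 & C1) & (x2 & c2 & H2 & C2) & Gr).
    exists g. split; [exists x1, c1; split; [auto|apply E; auto]|split; [exists x2, c2; split; [auto|apply E; auto]|]].
    intros h (y1 & d1 & F1 & D1) (y2 & d2 & F2 & D2).
    destruct (Gr h (ex_intro _ y1 (ex_intro _ d1 (conj F1 (proj2 (E _ _) D1)))) (ex_intro _ y2 (ex_intro _ d2 (conj F2 (proj2 (E _ _) D2))))) as (z & e & F & De).
    exists z, e. split; auto. apply E; auto.
Qed.

Section PC.
Variables (T : Type) (le : T -> T -> Prop).
Hypothesis Hp : is_poset le.

Definition PCat : ACat :=
  {| Arr := IGen le; Ob := T; src := fun a => fst (proj1_sig a); tgt := fun a => snd (proj1_sig a);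
     aeq := eq; isid := fun a => fst (proj1_sig a) = snd (proj1_sig a);
     mul := fun a b c => snd (proj1_sig a) = fst (proj1_sig b) /\ proj1_sig c = (fst (proj1_sig a), snd (proj1_sig b)) |}.

Lemma ig_eq (a b : IGen le) : proj1_sig a = proj1_sig b -> a = b.
Proof. destruct a as [p h], b as [q k]; simpl. intros ->. f_equal. apply proof_irrelevance. Qed.

Lemma le_refl x : le x x. Proof. apply Hp. Qed.
Lemma le_antisym x y : le x y -> le y x -> x = y. Proof. apply Hp. Qed.
Lemma le_trans x y z : le x y -> le y z -> le x z. Proof. apply Hp. Qed.

Definition mkI x y (h : le x y) : IGen le := exist (fun p => le (fst p) (snd p)) (x, y) h.

Lemma good_P : Good PCat.
Proof.
  constructor; simpl.
  - tauto.
  - tauto.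
  - intros [[x y] h] [[y' z] k]; simpl. intros ->. exists (mkI (le_trans h k)). auto.
  - intros a b c c' (_ & E1) (_ & E2). apply ig_eq. congruence.
  - intros a b c (_ & E). rewrite E; auto.
  - intros a b c (_ & E). rewrite E; auto.
  - auto.
  - intros [[x y] h]. exists (mkI (le_refl y)). simpl. auto.
  - intros [[x y] h]. exists (mkI (le_refl x)). simpl. auto.
  - intros [[x y] h] [[y' z] k]; simpl. intros E1 E2. split; auto. congruence.
  - intros [[x y] h] [[y' z] k]; simpl. intros E1 E2. split; auto. congruence.
  - intros [[x1 y1] h1] [[x2 y2] h2] [[x3 y3] h3] [[a1 a2] ha] [[b1 b2] hb] [[c1 c2] hc]; simpl.
    intros (E1 & E2) (E3 & E4) (E5 & E6). injection E2; injection E4; injection E6; intros; subst. split; auto.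
  - intros [[x1 y1] h1] [[x2 y2] h2] [[x3 y3] h3]; simpl. intros (E1 & E2) E3. injection E2; intros; subst.
    simpl in *. apply le_antisym; auto.
  - intros [[x1 y1] h1] [[x2 y2] h2] [[x3 y3] h3]; simpl. intros (E1 & E2) E3. injection E2; intros; subst.
    simpl in *. apply le_antisym; auto.
Qed.

Lemma P_transfer : is_gcd_monoid (@interval_rel T le) -> is_gcd_monoid (@Umon_rel PCat).
Proof.
  apply gcd_transfer.
  - intros a b [(x & h & -> & ->)|(x & y & z & hxy & hyz & hxz & -> & ->)].
    + apply cong_one. left. exists (mkI h). simpl. auto.
    + apply cong_sym. apply cong_one. right; left. exists (mkI hxy), (mkI hyz), (mkI hxz). simpl. auto.
  - intros a b [(e & I & -> & ->)|[(x & y & z & H & -> & ->)|(x & y & H & -> & ->)]].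
    + destruct e as [[x y] h]. simpl in I. subst y. apply cong_one. left. exists x, h. auto.
    + destruct x as [[x1 x2] h1], y as [[y1 y2] h2], z as [[z1 z2] h3]. simpl in H.
      destruct H as (E1 & E2). injection E2; intros; subst. apply cong_sym, cong_one. right.
      exists x1, y1, y2, h1, h2, h3. auto.
    + simpl in H. subst. apply cong_refl.
Qed.

Lemma P_lattice : is_gcd_monoid (@interval_rel T le) ->
  (forall x y y', le x y -> le x y' -> exists w, le x w /\ le w y /\ le w y' /\
      forall w', le x w' -> le w' y -> le w' y' -> le w' w) /\
  (forall y y' x, le y x -> le y' x -> exists w, le y w /\ le y' w /\ le w x /\
      forall w', le y w' -> le y' w' -> le w' x -> le w w').
Proof.
  intro H. apply P_transfer in H. destruct (C_lr_from_U good_P H) as (L & Rg). split.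
  - intros x y y' h h'. destruct (L (mkI h) (mkI h') eq_refl) as (g & (z1 & Z1) & (z2 & Z2) & Gr).
    destruct g as [[g1 g2] hg]. exists g2.
    destruct z1 as [[a1 a2] ha], z2 as [[b1 b2] hb]. simpl in *.
    destruct Z1 as (E1 & E2), Z2 as (E3 & E4). injection E2; injection E4; intros; subst.
    split; auto. split; auto. split; auto.
    intros w' K1 K2 K3. destruct (Gr (mkI K1)) as (z & Z).
    + exists (mkI K2). simpl. auto.
    + exists (mkI K3). simpl. auto.
    + destruct z as [[c1 c2] hc]. simpl in Z. destruct Z as (E5 & E6). injection E6; intros; subst. auto.
  - intros y y' x h h'. destruct (Rg (mkI h) (mkI h') eq_refl) as (g & (z1 & Z1) & (z2 & Z2) & Gr).
    destruct g as [[g1 g2] hg]. exists g1.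
    destruct z1 as [[a1 a2] ha], z2 as [[b1 b2] hb]. simpl in *.
    destruct Z1 as (E1 & E2), Z2 as (E3 & E4). injection E2; injection E4; intros; subst.
    split; auto. split; auto. split; auto.
    intros w' K1 K2 K3. destruct (Gr (mkI K3)) as (z & Z).
    + exists (mkI K1). simpl. auto.
    + exists (mkI K2). simpl. auto.
    + destruct z as [[c1 c2] hc]. simpl in Z. destruct Z as (E5 & E6). injection E6; intros; subst. auto.
Qed.
End PC.

Section CC.
Variables (T : Type) (le : T -> T -> Prop) (u v : T).
Hypothesis Hp : is_poset le.
Hypothesis Hs : extreme_spindle le u v.

Let lr x : le x x := proj1 Hp x.
Let lanti x y : le x y -> le y x -> x = y := proj1 (proj2 Hp) x y.
Let ltr x y z : le x y -> le y z -> le x z := proj2 (proj2 Hp) x y z.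

Lemma luv : le u v. Proof. destruct Hs as ((H & _) & _). apply H. Qed.
Lemma nuv : u <> v. Proof. destruct Hs as ((H & _) & _). apply H. Qed.
Lemma minu x : le x u -> x = u. Proof. destruct Hs as (_ & H & _). apply H. Qed.
Lemma maxv x : le v x -> x = v. Proof. destruct Hs as (_ & _ & H). apply H. Qed.
Lemma Heq : equiv_on (open_int le u v) (comparable le). Proof. destruct Hs as ((_ & _ & H) & _). exact H. Qed.

Definition Zc (y : T) : T -> Prop := fun t => t = u \/ t = v \/ (open_int le u v t /\ comparable le y t).

Lemma open_closed t : open_int le u v t -> closed_int le u v t.
Proof. intros ((H1 & _) & (H2 & _)). split; auto. Qed.

Lemma maxchain_Zc y : open_int le u v y -> maxchain le u v (Zc y).
Proof.
  intro Hy. destruct Heq as (Er & Es & Et).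
  assert (CH : chain_in le u v (Zc y)).
  { split.
    - intros x [->|[->|(Ho & _)]]. split; auto using luv. split; auto using luv. apply open_closed; auto.
    - intros x z Hx Hz.
      destruct Hx as [->|[->|(Hxo & Hxc)]].
      + left. destruct Hz as [->|[->|(Ho & _)]]; auto using luv. apply open_closed; auto.
      + right. destruct Hz as [->|[->|(Ho & _)]]; auto using luv. apply open_closed; auto.
      + destruct Hz as [->|[->|(Hzo & Hzc)]].
        * right. apply open_closed; auto.
        * left. apply open_closed; auto.
        * eapply Et; eauto. }
  split; auto.
  intros Z' (C1 & C2) Hsub t Ht.
  destruct (classic (t = u)) as [->|Nu]. left; auto.
  destruct (classic (t = v)) as [->|Nv]. right; left; auto.
  right; right. destruct (C1 t Ht) as (H1 & H2). split. split; split; auto.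
  apply C2; auto. apply Hsub. right; right. split; auto.
Qed.

Lemma chain_char Z y : maxchain le u v Z -> Z y -> open_int le u v y -> forall t, Z t <-> Zc y t.
Proof.
  intros (CH & MX) Zy Hy.
  assert (S : forall t, Z t -> Zc y t).
  { intros t Zt. destruct (classic (t = u)) as [->|Nu]. left; auto.
    destruct (classic (t = v)) as [->|Nv]. right; left; auto.
    right; right. destruct (proj1 CH t Zt) as (H1 & H2). split. split; split; auto.
    apply (proj2 CH); auto. }
  intro t. split; auto. intro Ht. apply (MX (Zc y)); auto. apply maxchain_Zc; auto.
Qed.

Lemma chains_same Z Z' y : maxchain le u v Z -> maxchain le u v Z' -> Z y -> Z' y -> open_int le u v y ->
  forall t, Z t <-> Z' t.
Proof. intros M M' H H' Hy t. rewrite (chain_char M H Hy), (chain_char M' H' Hy). tauto. Qed.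

Lemma chain_mem Z y t : maxchain le u v Z -> Z y -> open_int le u v y -> open_int le u v t -> comparable le y t -> Z t.
Proof. intros M Zy Hy Ht C. apply (chain_char M Zy Hy). right; right; auto. Qed.

Notation K := (Ccat le u v).

Lemma CIv_eq x y h n h' n' : @CIv T le u v x y h n = @CIv T le u v x y h' n'.
Proof. f_equal; apply proof_irrelevance. Qed.

Lemma CCh_eq Z hZ Z' hZ' : (forall t, Z t <-> Z' t) -> @CCh T le u v Z hZ = @CCh T le u v Z' hZ'.
Proof.
  intro E. assert (Z = Z') by (apply functional_extensionality; intro t; apply propositional_extensionality; auto).
  subst. f_equal; apply proof_irrelevance.
Qed.

Lemma Caeq_eq (a b : CArr le u v) : Caeq a b <-> a = b.
Proof.
  split.
  - destruct a, b; simpl; try tauto. intros (-> & ->). apply CIv_eq. apply CCh_eq.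
  - intros ->. destruct b; simpl; auto. tauto.
Qed.


Lemma open_of (z : T) : le u z -> z <> u -> le z v -> z <> v -> open_int le u v z.
Proof. intros. split; split; auto. Qed.

Lemma K1 (a b c : CArr le u v) : Cmul a b c -> Ctgt a = Csrc b.
Proof. destruct 1; reflexivity. Qed.
Lemma K4 (a b c : CArr le u v) : Cmul a b c -> Csrc c = Csrc a.
Proof. destruct 1; reflexivity. Qed.
Lemma K4' (a b c : CArr le u v) : Cmul a b c -> Ctgt c = Ctgt b.
Proof. destruct 1; reflexivity. Qed.

Lemma K2 (a b : CArr le u v) : Ctgt a = Csrc b -> exists c, Cmul a b c.
Proof.
  destruct a as [x y h n|Z hZ], b as [y' z h' n'|Z' hZ']; simpl; intro E.
  - subst y'. destruct (classic ((x, z) = (u, v))) as [E|N].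
    + injection E; intros; subst.
      assert (Yu : y <> u) by (intro; subst; apply n'; auto).
      assert (Yv : y <> v) by (intro; subst; apply n; auto).
      assert (Ho : open_int le u v y) by (apply open_of; auto).
      exists (CCh (maxchain_Zc Ho)). apply Cmul_split. apply Ho. apply Ho. right; right. split; auto. left; apply lr.
    + exists (CIv (ltr h h') N). apply Cmul_iv.
  - subst y. assert (x = u) by (apply minu; auto). subst x.
    exists (CCh hZ'). apply Cmul_idl. tauto.
  - subst y'. assert (z = v) by (apply maxv; auto). subst z.
    exists (CCh hZ). apply Cmul_idr. tauto.
  - exfalso. apply nuv. auto.
Qed.

Lemma K3 (a b c c' : CArr le u v) : Cmul a b c -> Cmul a b c' -> c = c'.
Proof.
  intros H1 H2. apply Caeq_eq. destruct H1; inversion H2; subst; simpl; auto.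
 all: try (intros t; match goal with H: forall t, _ <-> _, H1 : forall t, _ <-> _ |- _ => rewrite <- H, <- H1; tauto end).
 eapply chains_same; eauto. split; eauto.
Qed.

Lemma idnot (x : T) : (x, x) <> (u, v).
Proof. intro E. injection E; intros E1 E2. apply nuv; congruence. Qed.

Lemma K5 (e : CArr le u v) : Cisid e -> Csrc e = Ctgt e.
Proof. destruct e; simpl; tauto. Qed.

Lemma K6 (a : CArr le u v) : exists e : CArr le u v, Cisid e /\ Csrc e = Ctgt a.
Proof. exists (@CIv T le u v _ _ (lr (Ctgt a)) (@idnot (Ctgt a))). simpl. auto. Qed.
Lemma K6' (a : CArr le u v) : exists e : CArr le u v, Cisid e /\ Csrc e = Csrc a.
Proof. exists (@CIv T le u v _ _ (lr (Csrc a)) (@idnot (Csrc a))). simpl. auto. Qed.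

Lemma K7 (e b : CArr le u v) : Cisid e -> Ctgt e = Csrc b -> Cmul e b b.
Proof.
  destruct e as [x y h n|]; simpl; [|tauto]. intros -> .
  destruct b as [y' z h' n'|Z hZ]; simpl; intros ->.
  - apply Cmul_iv.
  - apply Cmul_idl. tauto.
Qed.

Lemma K7' (a e : CArr le u v) : Cisid e -> Ctgt a = Csrc e -> Cmul a e a.
Proof.
  destruct e as [x y h n|]; simpl; [|tauto]. intros -> .
  destruct a as [w z h' n'|Z hZ]; simpl; intros <-.
  - apply Cmul_iv.
  - apply Cmul_idr. tauto.
Qed.

Lemma K9 (a b c : CArr le u v) : Cmul a b c -> Cisid c -> Cisid a.
Proof. destruct 1; simpl; try tauto. intros ->. apply lanti; auto. Qed.
Lemma K9' (a b c : CArr le u v) : Cmul a b c -> Cisid c -> Cisid b.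
Proof. destruct 1; simpl; try tauto. intros ->. apply lanti; auto. Qed.

End CC.
Lemma K8 (T : Type) (le : T -> T -> Prop) (u v : T) (Hp : is_poset le) (Hs : extreme_spindle le u v) (a b c ab bc abc : CArr le u v) : Cmul a b ab -> Cmul b c bc -> Cmul ab c abc -> Cmul a bc abc.
Proof.
  intros H1 H2 H3. destruct H1; inversion H2; subst; inversion H3; subst.
  all: try apply Cmul_iv.
  - assert (Ny : y <> z0).
    { intro E. subst y. pose proof (maxv Hs h2). subst z. destruct H7; congruence. }
    assert (Nx : x <> y). { intro E. subst y. apply n6. reflexivity. }
    assert (Hy : open_int le x z0 y) by (split; split; auto).
    apply Cmul_split; try apply Hy.
    apply (chain_mem Hp Hs hZ H8 (conj H5 H7) Hy (or_intror h2)).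
  - apply Cmul_idl. intro t. rewrite <- H5, <- H1. tauto.
  - exfalso. pose proof (minu Hs h1). subst x. apply n8. reflexivity.
  - apply Cmul_idl. apply (chains_same Hp Hs hZ hZ0 H7 H10). split; auto.
  - apply Cmul_idl. intro t. rewrite <- H4, <- H, H1. tauto.
  - apply Cmul_idr. intro t. rewrite <- H4, <- H. tauto.
  - exfalso. destruct H4; congruence.
  - apply Cmul_split; auto. apply H6; auto.
  - apply Cmul_idl. intro t. repeat match goal with H : forall t, _ <-> _ |- _ => pose proof (H t); clear H end; tauto.
Qed.

Section CC2.
Variables (T : Type) (le : T -> T -> Prop) (u v : T).
Hypothesis Hp : is_poset le.
Hypothesis Hs : extreme_spindle le u v.
Notation CA := (CArr le u v).

Lemma inv_ld_iv (k z : CA) x y h n : Cmul k z (@CIv T le u v x y h n) ->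
  exists w hw nw, k = @CIv T le u v x w hw nw /\ le w y.
Proof. intro H. inversion H. subst. eauto. Qed.

Lemma inv_rd_iv (k z : CA) x y h n : Cmul z k (@CIv T le u v x y h n) ->
  exists w hw nw, k = @CIv T le u v w y hw nw /\ le x w.
Proof. intro H. inversion H. subst. eauto. Qed.

Lemma inv_ld_ch (k z : CA) Z hZ : Cmul k z (@CCh T le u v Z hZ) ->
  (exists h n, k = @CIv T le u v u u h n) \/
  (exists Z' hZ', k = @CCh T le u v Z' hZ' /\ forall t, Z' t <-> Z t) \/
  (exists w h n, k = @CIv T le u v u w h n /\ open_int le u v w /\ Z w).
Proof.
  intro H. inversion H; subst.
  - left. eauto.
  - right; left. eexists _, _. split; [reflexivity|]. auto.
  - right; right. eexists _, _, _. split; [reflexivity|]. split; auto. split; auto.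
Qed.

Lemma inv_rd_ch (k z : CA) Z hZ : Cmul z k (@CCh T le u v Z hZ) ->
  (exists h n, k = @CIv T le u v v v h n) \/
  (exists Z' hZ', k = @CCh T le u v Z' hZ' /\ forall t, Z' t <-> Z t) \/
  (exists w h n, k = @CIv T le u v w v h n /\ open_int le u v w /\ Z w).
Proof.
  intro H. inversion H; subst.
  - right; left. eexists _, _. split; [reflexivity|]. auto.
  - left. eauto.
  - right; right. eexists _, _, _. split; [reflexivity|]. split; auto. split; auto.
Qed.

End CC2.
Section CC3.
Variables (T : Type) (le : T -> T -> Prop) (u v : T).
Hypothesis Hp : is_poset le.
Hypothesis Hs : extreme_spindle le u v.
Notation CA := (CArr le u v).

Lemma Klc (a x y c : CA) : Cmul a x c -> Cmul a y c -> x = y.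
Proof.
  intros H1 H2. inversion H1; subst; inversion H2; subst.
  all: try apply CIv_eq.
  all: try (exfalso; match goal with H : lt le ?a ?a |- _ => destruct H; congruence end).
  all: apply CCh_eq; intro t; repeat match goal with H : forall t, _ <-> _ |- _ => pose proof (H t); clear H end; tauto.
Qed.

Lemma Krc (a x y c : CA) : Cmul x a c -> Cmul y a c -> x = y.
Proof.
  intros H1 H2. inversion H1; subst; inversion H2; subst.
  all: try apply CIv_eq.
  all: try (exfalso; match goal with H : lt le ?a ?a |- _ => destruct H; congruence end).
  all: apply CCh_eq; intro t; repeat match goal with H : forall t, _ <-> _ |- _ => pose proof (H t); clear H end; tauto.
Qed.
End CC3.
Section CC4.
Variables (T : Type) (le : T -> T -> Prop) (u v : T).
Hypothesis Hp : is_poset le.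
Hypothesis Hs : extreme_spindle le u v.
Hypothesis PL : forall x y y', le x y -> le x y' -> exists w, le x w /\ le w y /\ le w y' /\
      forall w', le x w' -> le w' y -> le w' y' -> le w' w.
Hypothesis PR : forall y y' x, le y x -> le y' x -> exists w, le y w /\ le y' w /\ le w x /\
      forall w', le y w' -> le y' w' -> le w' x -> le w w'.
Notation CA := (CArr le u v).

Let lr x : le x x := proj1 Hp x.
Let lanti x y : le x y -> le y x -> x = y := proj1 (proj2 Hp) x y.
Let ltr x y z : le x y -> le y z -> le x z := proj2 (proj2 Hp) x y z.

Definition LD (k a : CA) := exists z, Cmul k z a.
Definition RD (k a : CA) := exists z, Cmul z k a.

Lemma nn1 x w y : le w y -> (x, y) <> (u, v) -> (x, w) <> (u, v).
Proof. intros H N E. injection E as E1 E2. apply N. rewrite E2 in H. rewrite (maxv Hs H). congruence. Qed.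
Lemma nn2 x w y : le x w -> (x, y) <> (u, v) -> (w, y) <> (u, v).
Proof. intros H N E. injection E as E1 E2. apply N. rewrite E1 in H. rewrite (minu Hs H). congruence. Qed.

Lemma mk_LD x w y (hxw : le x w) nxw (hwy : le w y) (hxy : le x y) nxy :
  LD (@CIv T le u v x w hxw nxw) (@CIv T le u v x y hxy nxy).
Proof. exists (CIv hwy (nn2 hxw nxy)). apply Cmul_iv. Qed.

Lemma mk_RD x w y (hxw : le x w) (hwy : le w y) nwy (hxy : le x y) nxy :
  RD (@CIv T le u v w y hwy nwy) (@CIv T le u v x y hxy nxy).
Proof. exists (CIv hxw (nn1 hwy nxy)). apply Cmul_iv. Qed.

Lemma LD_id (e g : CA) : Cisid e -> Ctgt e = Csrc g -> LD e g.
Proof. intros. exists g. apply K7; auto. Qed.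
Lemma RD_id (e g : CA) : Cisid e -> Ctgt g = Csrc e -> RD e g.
Proof. intros. exists g. apply K7'; auto. Qed.
Lemma LD_refl (g : CA) : LD g g.
Proof. destruct (K6 Hp Hs g) as (e & I & E). exists e. apply K7'; auto. Qed.
Lemma RD_refl (g : CA) : RD g g.
Proof. destruct (K6' Hp Hs g) as (e & I & E). exists e. apply K7; auto. rewrite <- (K5 I). auto. Qed.

Lemma chain_iff_tac : True. Proof. exact I. Qed.

Lemma Klg_ivch y h n Z hZ : exists g,
  LD g (@CIv T le u v u y h n) /\ LD g (@CCh T le u v Z hZ) /\
  forall k, LD k (@CIv T le u v u y h n) -> LD k (@CCh T le u v Z hZ) -> LD k g.
Proof.
  assert (Ny : y <> v) by (intro E; apply n; rewrite E; auto).
  destruct (PL h (luv Hs)) as (w & H1 & H2 & H3 & H4).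
  destruct (classic (open_int le u v w /\ Z w)) as [(Ow & Zw)|NO].
  - exists (CIv H1 (nn1 H2 n)). split; [apply mk_LD; auto|split].
    + assert (Nw : (w, v) <> (u, v)) by (intro E; injection E as E1; destruct Ow as ((_ & N1) & _); apply N1; auto).
      exists (CIv H3 Nw). apply Cmul_split; try apply Ow; auto.
    + intros k (z1 & Z1) (z2 & Z2).
      destruct (inv_ld_iv Z1) as (w' & hw & nw & -> & Hw').
      destruct (inv_ld_ch Z2) as [(h0 & n0 & E0)|[(Z0 & hZ0 & E0 & _)|(w0 & h0 & n0 & E0 & O0 & Z0)]].
      * injection E0 as E0. subst w'. apply LD_id; simpl; auto.
      * discriminate.
      * injection E0 as E0. subst w0. apply mk_LD. apply H4; auto. apply O0.
  - exists (CIv (lr u) (@idnot _ _ _ _ Hs u)). split; [apply LD_id; simpl; auto|split; [apply LD_id; simpl; auto|]].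
    intros k (z1 & Z1) (z2 & Z2).
    destruct (inv_ld_iv Z1) as (w' & hw & nw & -> & Hw').
    destruct (inv_ld_ch Z2) as [(h0 & n0 & E0)|[(Z0 & hZ0 & E0 & _)|(w0 & h0 & n0 & E0 & O0 & Z0)]].
    * injection E0 as E0. subst w'. apply LD_id; simpl; auto.
    * discriminate.
    * exfalso. injection E0 as E0. subst w0. apply NO.
      assert (Lw : le w' w) by (apply H4; auto; apply O0).
      assert (Ow : open_int le u v w).
      { split; split; auto.
        - intro E. rewrite <- E in Lw. destruct O0 as ((_ & N0) & _). apply N0. apply lanti; auto.
        - intro E. rewrite E in H2. apply Ny. apply (maxv Hs H2). }
      split; auto. apply (chain_mem Hp Hs hZ Z0 O0 Ow (or_introl Lw)).
Qed.

Lemma Klg (a b : CA) : Csrc a = Csrc b -> exists g, LD g a /\ LD g b /\ forall k, LD k a -> LD k b -> LD k g.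
Proof.
  destruct a as [x y h n|Z hZ], b as [x' y' h' n'|Z' hZ']; simpl; intro E.
  - subst x'. destruct (PL h h') as (w & H1 & H2 & H3 & H4).
    exists (CIv H1 (nn1 H2 n)). split; [apply mk_LD; auto|split; [apply mk_LD; auto|]].
    intros k (z1 & Z1) (z2 & Z2).
    destruct (inv_ld_iv Z1) as (w1 & hw1 & nw1 & -> & L1).
    destruct (inv_ld_iv Z2) as (w2 & hw2 & nw2 & E2 & L2).
    injection E2 as E2. subst w2. apply mk_LD. apply H4; auto.
  - subst x. apply Klg_ivch.
  - subst x'. destruct (Klg_ivch h' n' hZ) as (g & G1 & G2 & G3). exists g. split; [exact G2|split; [exact G1|intros k K1 K2; apply G3; auto]].
  - destruct (classic (forall t, Z t <-> Z' t)) as [Eq|Neq].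
    + exists (CCh hZ). split; [apply LD_refl|split].
      * exists (CIv (lr v) (@idnot _ _ _ _ Hs v)). apply Cmul_idr. auto.
      * intros k H _. auto.
    + exists (CIv (lr u) (@idnot _ _ _ _ Hs u)). split; [apply LD_id; simpl; auto|split; [apply LD_id; simpl; auto|]].
      intros k (z1 & Z1) (z2 & Z2).
      destruct (inv_ld_ch Z1) as [(h0 & n0 & E0)|[(Z0 & hZ0 & E0 & I0)|(w0 & h0 & n0 & E0 & O0 & Z0)]];
      destruct (inv_ld_ch Z2) as [(h1 & n1 & E1)|[(Z1' & hZ1 & E1 & I1)|(w1 & h1 & n1 & E1 & O1 & Z1'')]];
      subst k; try discriminate.
      all: try (apply LD_id; simpl; auto; fail).
      all: exfalso; injection E1 as E1.
      all: try (apply Neq; intro t; subst; rewrite <- I0, <- I1; tauto).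
      all: try (destruct O1 as ((_ & NN) & _); apply NN; auto; fail).
      all: try (destruct O0 as ((_ & NN) & _); apply NN; auto; fail).
      all: subst; apply Neq; apply (chains_same Hp Hs hZ hZ' Z0 Z1'' O0).
Qed.

Lemma Krg_ivch x h n Z hZ : exists g,
  RD g (@CIv T le u v x v h n) /\ RD g (@CCh T le u v Z hZ) /\
  forall k, RD k (@CIv T le u v x v h n) -> RD k (@CCh T le u v Z hZ) -> RD k g.
Proof.
  assert (Nx : x <> u) by (intro E; apply n; rewrite E; auto).
  destruct (PR h (luv Hs)) as (w & H1 & H2 & H3 & H4).
  destruct (classic (open_int le u v w /\ Z w)) as [(Ow & Zw)|NO].
  - assert (Nw : (w, v) <> (u, v)) by (intro E; injection E as E1; destruct Ow as ((_ & N1) & _); apply N1; auto).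
    exists (CIv H3 Nw). split; [apply mk_RD; auto|split].
    + assert (Nuw : (u, w) <> (u, v)) by (intro E; injection E as E1; destruct Ow as (_ & (_ & N1)); apply N1; auto).
      exists (CIv H2 Nuw). apply Cmul_split; try apply Ow; auto.
    + intros k (z1 & Z1) (z2 & Z2).
      destruct (inv_rd_iv Z1) as (w' & hw & nw & -> & Hw').
      destruct (inv_rd_ch Z2) as [(h0 & n0 & E0)|[(Z0 & hZ0 & E0 & _)|(w0 & h0 & n0 & E0 & O0 & Z0)]].
      * injection E0 as E0. subst w'. apply RD_id; simpl; auto.
      * discriminate.
      * injection E0 as E0. subst w0. apply mk_RD. apply H4; auto. apply O0.
  - exists (CIv (lr v) (@idnot _ _ _ _ Hs v)). split; [apply RD_id; simpl; auto|split; [apply RD_id; simpl; auto|]].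
    intros k (z1 & Z1) (z2 & Z2).
    destruct (inv_rd_iv Z1) as (w' & hw & nw & -> & Hw').
    destruct (inv_rd_ch Z2) as [(h0 & n0 & E0)|[(Z0 & hZ0 & E0 & _)|(w0 & h0 & n0 & E0 & O0 & Z0)]].
    * injection E0 as E0. subst w'. apply RD_id; simpl; auto.
    * discriminate.
    * exfalso. injection E0 as E0. subst w0. apply NO.
      assert (Lw : le w w') by (apply H4; auto; apply O0).
      assert (Ow : open_int le u v w).
      { split; split; auto.
        - intro E. rewrite <- E in H1. apply Nx. apply (minu Hs H1).
        - intro E. rewrite E in Lw. destruct O0 as (_ & (_ & N0)). apply N0. apply lanti; auto; apply O0. }
      split; auto. apply (chain_mem Hp Hs hZ Z0 O0 Ow (or_intror Lw)).
Qed.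

Lemma Krg (a b : CA) : Ctgt a = Ctgt b -> exists g, RD g a /\ RD g b /\ forall k, RD k a -> RD k b -> RD k g.
Proof.
  destruct a as [x y h n|Z hZ], b as [x' y' h' n'|Z' hZ']; simpl; intro E.
  - subst y'. destruct (PR h h') as (w & H1 & H2 & H3 & H4).
    exists (CIv H3 (nn2 H1 n)). split; [apply mk_RD; auto|split; [apply mk_RD; auto|]].
    intros k (z1 & Z1) (z2 & Z2).
    destruct (inv_rd_iv Z1) as (w1 & hw1 & nw1 & -> & L1).
    destruct (inv_rd_iv Z2) as (w2 & hw2 & nw2 & E2 & L2).
    injection E2 as E2. subst w2. apply mk_RD. apply H4; auto.
  - subst y. apply Krg_ivch.
  - subst y'. destruct (Krg_ivch h' n' hZ) as (g & G1 & G2 & G3). exists g. split; [exact G2|split; [exact G1|intros k K1 K2; apply G3; auto]].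
  - destruct (classic (forall t, Z t <-> Z' t)) as [Eq|Neq].
    + exists (CCh hZ). split; [apply RD_refl|split].
      * exists (CIv (lr u) (@idnot _ _ _ _ Hs u)). apply Cmul_idl. auto.
      * intros k H _. auto.
    + exists (CIv (lr v) (@idnot _ _ _ _ Hs v)). split; [apply RD_id; simpl; auto|split; [apply RD_id; simpl; auto|]].
      intros k (z1 & Z1) (z2 & Z2).
      destruct (inv_rd_ch Z1) as [(h0 & n0 & E0)|[(Z0 & hZ0 & E0 & I0)|(w0 & h0 & n0 & E0 & O0 & Z0)]];
      destruct (inv_rd_ch Z2) as [(h1 & n1 & E1)|[(Z1' & hZ1 & E1 & I1)|(w1 & h1 & n1 & E1 & O1 & Z1'')]];
      subst k; try discriminate.
      all: try (apply RD_id; simpl; auto; fail).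
      all: exfalso; injection E1 as E1.
      all: try (apply Neq; intro t; subst; rewrite <- I0, <- I1; tauto).
      all: try (destruct O1 as (_ & (_ & NN)); apply NN; auto; fail).
      all: try (destruct O0 as (_ & (_ & NN)); apply NN; auto; fail).
      all: subst; apply Neq; apply (chains_same Hp Hs hZ hZ' Z0 Z1'' O0).
Qed.
End CC4.

Theorem proposition9p5 (T : Type) (le : T -> T -> Prop) (u v : T) :
  is_poset le ->
  is_gcd_monoid (@interval_rel T le) ->
  extreme_spindle le u v ->
  is_gcd_category (Ccat le u v) /\ is_gcd_monoid (@Umon_rel (Ccat le u v)).
Proof.
  intros Hp HM Hs.
  destruct (P_lattice Hp HM) as (PL & PR).
  assert (G : Good (Ccat le u v)).
  { constructor; simpl.
    - apply Caeq_eq; auto.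
    - apply K1; auto. - apply K2; auto. - apply K3; auto. - apply K4; auto. - apply K4'; auto.
    - apply K5; auto. - apply K6; auto. - apply K6'; auto. - apply K7; auto. - apply K7'; auto.
    - intros. eapply K8; eauto. - apply K9; auto. - apply K9'; auto. }
  assert (GC : is_gcd_category (Ccat le u v)).
  { split; [|split; [|split; [|split]]].
    - intros x y e H I. exact (K9 Hp H I).
    - intros a a' x y c d H1 H2 Ea Ec. simpl in *. apply (Caeq_eq Hp) in Ea, Ec. subst. apply (Caeq_eq Hp). eapply Klc; eauto.
    - intros a a' x y c d H1 H2 Ea Ec. simpl in *. apply (Caeq_eq Hp) in Ea, Ec. subst. apply (Caeq_eq Hp). eapply Krc; eauto.
    - intros a b E. destruct (Klg Hp Hs PL E) as (g & L1 & L2 & Gr). exists g.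
      split; [apply (ldC_iff G); exact L1|split; [apply (ldC_iff G); exact L2|]].
      intros h H1 H2. apply (ldC_iff G). apply Gr; apply (ldC_iff G); auto.
    - intros a b E. destruct (Krg Hp Hs PR E) as (g & L1 & L2 & Gr). exists g.
      pose proof (ldC_iff (good_op G)) as LI.
      split; [apply (LI g a); exact L1|split; [apply (LI g b); exact L2|]].
      intros h H1 H2. apply (LI h g). apply Gr; [apply (LI h a)|apply (LI h b)]; auto. }
  split; auto. apply U_gcd; auto.
Qed.
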